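(* Let $\Lambda,\alpha,r$ be positive integers with $\alpha\in[\Lambda-1]$ and $r\in[\Lambda-\alpha]$. Let $D_{\Lambda,r,\alpha}$ be the $\binom{\Lambda}{r}\times\binom{\Lambda}{\alpha}$ array defined below. Then $D_{\Lambda,r,\alpha}$ is a $\binom{r+\alpha}{r}$-regular $\left(\binom{\Lambda}{\alpha},\binom{\Lambda}{r},\binom{\Lambda}{\alpha+r}\right)$ MRA. Moreover, the symbol $*$ appears exactly $\binom{\Lambda}{r}-\binom{\Lambda-\alpha}{r}$ times in each column.
   Context: Notation: $[0,n)=\{0,1,\dots,n-1\}$, $[n]=\{1,\dots,n\}$. Construction (Algorithm 1): Order all subsets of $[0,\Lambda)$ of size $\alpha+r$ lexicographically and, for such a subset $T'$, let $y_{\alpha+r}(T')\in[0,\binom{\Lambda}{\alpha+r})$ be its position in this order minus 1. The array $D_{\Lambda,r,\alpha}$ has rows indexed by the $r$-subsets $T\subset[0,\Lambda)$ and columns indexed by the $\alpha$-subsets $U\subset[0,\Lambda)$, and entries $d_{T,U}=*$ if $T\cap U\neq\emptyset$, and $d_{T,U}=y_{\alpha+r}(T\cup U)$ if $T\cap U=\emptyset$. Map-Reduce Array (MRA): For positive integers $K,F,S$, an $F\times K$ array $P=[p_{f,k}]$, whose entries are either the symbol $*$ or integers from $[0,S)$, with every integer of $[0,S)$ occurring in $P$, is a $(K,F,S)$ MRA if: (C1) each integer occurs more than once in $P$; (C2) whenever two distinct entries satisfy $p_{f_1,k_1}=p_{f_2,k_2}=s$ with $s$ an integer, then $f_1\neq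 f_2$, $k_1\neq k_2$, and $p_{f_1,k_2}=p_{f_2,k_1}=*$. It is a $g$-regular MRA (for a constant $g\ge 2$) if it satisfies (C2) and every integer occurs exactly $g$ times. *)

(* Defs.v *)
From mathcomp Require Import all_boot.
Set Implicit Arguments. Unset Strict Implicit. Unset Printing Implicit Defensive.

(* An array entry: [None] is the symbol *, [Some s] is the integer s. *)

Definition occ (I J : finType) (P : I -> J -> option nat) (s : nat) : nat :=
  #|[set ij : I * J | P ij.1 ij.2 == Some s]|.

Definition MRA_array (I J : finType) (K F S : nat) (P : I -> J -> option nat) : Prop :=
  [/\ #|J| = K, #|I| = F,
      (forall i j s, P i j = Some s -> s < S) &
      (forall s, s < S -> exists i j, P i j = Some s)].

Definition MRA_C1 (I J : finType) (S : nat) (P : I -> J -> option nat) : Prop :=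
  forall s, s < S -> 1 < occ P s.

Definition MRA_C2 (I J : finType) (P : I -> J -> option nat) : Prop :=
  forall f1 f2 k1 k2 s, (f1, k1) <> (f2, k2) ->
    P f1 k1 = Some s -> P f2 k2 = Some s ->
    [/\ f1 <> f2, k1 <> k2, P f1 k2 = None & P f2 k1 = None].

Definition is_MRA (I J : finType) (K F S : nat) (P : I -> J -> option nat) : Prop :=
  [/\ MRA_array K F S P, MRA_C1 S P & MRA_C2 P].

Definition is_regular_MRA (I J : finType) (g K F S : nat) (P : I -> J -> option nat) : Prop :=
  [/\ 2 <= g, MRA_array K F S P, MRA_C2 P & (forall s, s < S -> occ P s = g)].

Fixpoint lex_lt (s t : seq nat) : bool :=
  match s, t with
  | [::], [::] => false
  | [::], _ :: _ => true
  | _ :: _, [::] => false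
  | x :: s', y :: t' => (x < y) || ((x == y) && lex_lt s' t')
  end.

Definition sset (L : nat) (A : {set 'I_L}) : seq nat := sort leq [seq val x | x in A].

(* y_k(T'): position of T' among the k-subsets of [0,L) in lexicographic order, minus 1. *)
Definition ylex (L k : nat) (T' : {set 'I_L}) : nat :=
  #|[set A : {set 'I_L} | (#|A| == k) && lex_lt (sset A) (sset T')]|.

Definition ksubset (L k : nat) := {A : {set 'I_L} | #|A| == k}.

Definition Darray (L r a : nat) (T : ksubset L r) (U : ksubset L a) : option nat :=
  if val T :&: val U == set0 then Some (ylex (a + r) (val T :|: val U)) else None.

(* Main.v *)
Require Import Defs.
From mathcomp Require Import all_boot.
Set Implicit Arguments. Unset Strict Implicit. Unset Printing Implicit Defensive.

Lemma lex_irr s : ~~ lex_lt s s.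
Proof. by elim: s => //= x s IH; rewrite ltnn eqxx. Qed.

Lemma lex_trans s t u : lex_lt s t -> lex_lt t u -> lex_lt s u.
Proof.
elim: s t u => [|x s IH] [|y t] [|z u] //=.
case/orP=> [lxy|/andP[/eqP-> Hst]]; case/orP=> [lyz|/andP[/eqP<- Htu]].
- by rewrite (ltn_trans lxy lyz).
- by rewrite lxy.
- by rewrite lyz.
- by rewrite eqxx (IH _ _ Hst Htu) orbT.
Qed.

Lemma lex_total s t : s != t -> lex_lt s t || lex_lt t s.
Proof.
elim: s t => [|x s IH] [|y t] //= Hne.
case: (ltngtP x y) => //= exy; subst y.
apply: IH; apply: contra Hne => /eqP-> //.
Qed.

Lemma mem_sset L (A : {set 'I_L}) (x : 'I_L) : (val x \in sset A) = (x \in A).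
Proof. by rewrite /sset mem_sort (mem_map val_inj) mem_enum. Qed.

Lemma sset_inj L (A B : {set 'I_L}) : sset A = sset B -> A = B.
Proof. by move=> H; apply/setP => x; rewrite -!mem_sset H. Qed.

Definition ksets L k := [set A : {set 'I_L} | #|A| == k].

Lemma card_ksets L k : #|ksets L k| = 'C(L, k).
Proof. by rewrite card_draws card_ord. Qed.

Lemma ylex_lt L k (X : {set 'I_L}) : #|X| = k -> ylex k X < 'C(L, k).
Proof.
move=> HX; rewrite /ylex -card_ksets; apply: proper_card.
apply/properP; split.
  by apply/subsetP => A; rewrite !inE => /andP[].
exists X; first by rewrite inE HX.
by rewrite inE (negbTE (lex_irr _)) andbF.
Qed.

Lemma ylex_inj L k (X Y : {set 'I_L}) : #|X| = k -> #|Y| = k ->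
  ylex k X = ylex k Y -> X = Y.
Proof.
move=> HX HY.
have key : forall X Y : {set 'I_L}, #|X| = k -> #|Y| = k ->
    lex_lt (sset X) (sset Y) -> ylex k X < ylex k Y.
  move=> X' Y' HX' HY' lt; apply: proper_card; apply/properP; split.
    apply/subsetP => A; rewrite !inE => /andP[-> H] /=; exact: lex_trans H lt.
  by exists X'; rewrite !inE ?HX' ?lt ?(negbTE (lex_irr _)) ?andbF ?eqxx.
move=> E; apply: sset_inj; apply/eqP; apply: contraT => Hne.
case/orP: (lex_total Hne) => lt.
  by have := key _ _ HX HY lt; rewrite E ltnn.
by have := key _ _ HY HX lt; rewrite E ltnn.
Qed.

Lemma ylex_surj L k s : s < 'C(L, k) -> exists X : {set 'I_L}, #|X| = k /\ ylex k X = s.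
Proof.
move=> Hs.
pose f (A : ksubset L k) : 'I_('C(L, k)) := Ordinal (ylex_lt (eqP (valP A))).
have finj : injective f.
  move=> A B /(congr1 val) /= E; apply: val_inj.
  exact: ylex_inj (eqP (valP A)) (eqP (valP B)) E.
have hc : #|{: ksubset L k}| >= #|'I_('C(L, k))|.
  rewrite card_ord card_sig -card_ksets; apply: eq_leq; apply: eq_card => A.
  by rewrite !inE.
have := inj_card_onto finj hc (Ordinal Hs).
case/codomP => A /(congr1 val) /= E.
by exists (val A); split; [exact: (eqP (valP A))|].
Qed.

Lemma DarrayP L r a (T : ksubset L r) (U : ksubset L a) s :
  Darray T U = Some s <-> (val T :&: val U == set0) /\ ylex (a + r) (val T :|: val U) = s.
Proof.
rewrite /Darray; case: ifP => H; split.
- by case=> <-.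
- by case=> _ ->.
- by [].
- by case=> H'; rewrite H' in H.
Qed.

Lemma card_disjU L (A B : {set 'I_L}) : A :&: B == set0 -> #|A :|: B| = #|A| + #|B|.
Proof. by move/eqP=> H; rewrite cardsU H cards0 subn0. Qed.

Lemma mysetDUK L (A B : {set 'I_L}) : A :&: B == set0 -> (A :|: B) :\: A = B.
Proof.
move/eqP/setP=> H; apply/setP => x; have := H x; rewrite !inE.
by case: (x \in A); case: (x \in B).
Qed.

Lemma mysetDUK' L (A B : {set 'I_L}) : A :&: B == set0 -> (A :|: B) :\: B = A.
Proof. by rewrite setIC setUC; apply: mysetDUK. Qed.

Lemma setUDsub L (A B : {set 'I_L}) : A \subset B -> A :|: (B :\: A) = B.
Proof.
move/subsetP=> H; apply/setP => x; rewrite !inE.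
by case xA: (x \in A); rewrite ?(H x xA).
Qed.

Lemma card_ksubset L k : #|{: ksubset L k}| = 'C(L, k).
Proof. by rewrite card_sig -card_ksets; apply: eq_card => A; rewrite !inE. Qed.

Theorem mainTheorem5 (L a r : nat) :
  0 < L -> 0 < a -> a <= L - 1 -> 0 < r -> r <= L - a ->
  is_regular_MRA 'C(r + a, r) 'C(L, a) 'C(L, r) 'C(L, a + r) (@Darray L r a) /\
  is_MRA 'C(L, a) 'C(L, r) 'C(L, a + r) (@Darray L r a) /\
  (forall U : ksubset L a,
     #|[set T : ksubset L r | Darray T U == None]| = 'C(L, r) - 'C(L - a, r)).
Proof.
move=> L0 a0 aL r0 rL.
have cT : forall T : ksubset L r, #|val T| = r by move=> T; exact: (eqP (valP T)).
have cU : forall U : ksubset L a, #|val U| = a by move=> U; exact: (eqP (valP U)).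
have Harr : MRA_array 'C(L, a) 'C(L, r) 'C(L, a + r) (@Darray L r a).
  split; rewrite ?card_ksubset //.
    move=> T U s /DarrayP [Hd <-]; apply: ylex_lt.
    by rewrite card_disjU // cT cU addnC.
  move=> s Hs; have [X [HX <-]] := ylex_surj Hs.
  have : 0 < #|[set A : {set 'I_L} | A \subset X & #|A| == r]|.
    by rewrite cards_draws HX bin_gt0 leq_addl.
  case/card_gt0P => T; rewrite inE => /andP[sTX /eqP HT].
  have HU : #|X :\: T| == a.
    by rewrite cardsD (setIidPr sTX) HX HT addnK.
  exists (exist _ T (introT eqP HT)), (exist _ (X :\: T) HU).
  apply/DarrayP => /=; split.
    by rewrite setIDA setIC -setIDA setDv setI0.
  by rewrite setUDsub.
have HC2 : MRA_C2 (@Darray L r a).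
  move=> T1 T2 U1 U2 s Hne /DarrayP [d1 e1] /DarrayP [d2 e2].
  have eX : val T1 :|: val U1 = val T2 :|: val U2.
    apply: (@ylex_inj L (a + r)); last by rewrite e1 e2.
      by rewrite card_disjU // cT cU addnC.
    by rewrite card_disjU // cT cU addnC.
  have eU1 : val U1 = (val T2 :|: val U2) :\: val T1 by rewrite -eX mysetDUK.
  have eU2 : val U2 = (val T1 :|: val U1) :\: val T2 by rewrite eX mysetDUK.
  have eT1 : val T1 = (val T2 :|: val U2) :\: val U1 by rewrite -eX mysetDUK'.
  have nT : T1 <> T2.
    move=> E; apply: Hne; congr (_, _) => //; apply: val_inj.
    by rewrite eU1 E mysetDUK.
  have nU : U1 <> U2.
    move=> E; apply: Hne; congr (_, _) => //; apply: val_inj.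
    by rewrite eT1 E mysetDUK'.
  have nonempty : forall (T T' : ksubset L r) (U' : ksubset L a),
      T <> T' -> val T \subset val T' :|: val U' -> val T' :&: val U' == set0 ->
      Darray T U' = None.
    move=> T T' U' nTT sub dis; rewrite /Darray ifF //; apply/negbTE.
    apply/negP => /eqP H0; apply: nTT; apply: val_inj; apply/eqP.
    rewrite eqEcard cT cT leqnn andbT; apply/subsetP => x xT.
    have := subsetP sub x xT; rewrite inE => /orP[] // xU.
    have : x \in val T :&: val U' by rewrite inE xT xU.
    by rewrite H0 inE.
  split => //.
  - apply: (nonempty _ T2) => //; first by rewrite -eX subsetUl.
  - apply: (nonempty _ T1) => //; first by move=> E; apply: nT.
    by rewrite eX subsetUl.
have Hocc : forall s, s < 'C(L, a + r) -> occ (@Darray L r a) s = 'C(r + a, r).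
  move=> s Hs; have [X [HX HsX]] := ylex_surj Hs.
  rewrite /occ.
  set S := [set ij | _].
  have inS : forall ij : ksubset L r * ksubset L a, (ij \in S) =
      (val ij.1 :&: val ij.2 == set0) && (val ij.1 :|: val ij.2 == X).
    move=> [T U]; rewrite inE /=; apply/eqP/andP.
      move/DarrayP=> [d e]; split=> //; apply/eqP; apply: (@ylex_inj L (a + r)).
      - by rewrite card_disjU // cT cU addnC.
      - by [].
      by rewrite e HsX.
    by case=> d /eqP e; apply/DarrayP; split; rewrite ?e.
  rewrite -(@card_in_imset _ _ (fun ij : ksubset L r * ksubset L a => val ij.1)).
    rewrite [r + a]addnC -HX -cards_draws; apply: eq_card => T.
    rewrite inE; apply/imsetP/andP.
      case=> [[T' U]]; rewrite inS => /andP[d /eqP e] -> /=.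
      by rewrite -e subsetUl cT.
    case=> sTX /eqP HT.
    have HU : #|X :\: T| == a.
      by rewrite cardsD (setIidPr sTX) HX HT addnK.
    exists (exist _ T (introT eqP HT), exist _ (X :\: T) HU) => //.
    rewrite inS /=; apply/andP; split.
      by rewrite setIDA setIC -setIDA setDv setI0.
    by rewrite setUDsub.
  move=> [T1 U1] [T2 U2]; rewrite !inS /= => /andP[d1 /eqP e1] /andP[d2 /eqP e2] E.
  have ET : T1 = T2 by apply: val_inj.
  subst T2; congr (_, _); apply: val_inj.
  move: (mysetDUK d1) (mysetDUK d2); rewrite e1 e2 => h1 h2; exact: (etrans (esym h1) h2).
have g2 : 2 <= 'C(r + a, r).
  case: r r0 {rL cT Harr HC2 Hocc} => // r' _; case: a a0 {aL cU} => // a' _.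
  rewrite addnS binS.
  have h1 : 0 < 'C(r'.+1 + a', r'.+1) by rewrite bin_gt0 addSn ltnS leq_addr.
  have h2 : 0 < 'C(r'.+1 + a', r') by rewrite bin_gt0 addSn ltnW // ltnS leq_addr.
  by rewrite -(addn1 1) leq_add.
split; first by split.
split.
  split => // s Hs; rewrite Hocc //.
move=> U.
have Hsome : #|[set T : ksubset L r | Darray T U != None]| = 'C(L - a, r).
  rewrite -(@card_imset _ _ val); last exact: val_inj.
  have eC : #|~: val U| = L - a by rewrite cardsCs setCK card_ord cU.
  rewrite -eC.
  rewrite -cards_draws; apply: eq_card => T; rewrite inE.
  apply/imsetP/andP.
    case=> T' ; rewrite inE /Darray; case: ifP => // d _ ->.
    split; last by rewrite cT.
    by rewrite -disjoints_subset -setI_eq0.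
  case=> sub /eqP HT; exists (exist _ T (introT eqP HT)) => //.
  by rewrite inE /Darray /= setI_eq0 disjoints_subset sub.
rewrite -Hsome -(card_ksubset L r) -(cardsC [set T : ksubset L r | Darray T U == None]).
have -> : ~: [set T : ksubset L r | Darray T U == None] = [set T | Darray T U != None].
  by apply/setP => T; rewrite !inE.
by rewrite addnK.
Qed.
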